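(* Let $N\ge1$, $V=\{1,\dots,N\}$, $A$ an $N\times N$ row-stochastic matrix, and $\sigma_1,\sigma_2,\dots$ random variables with values in $V$. Consider $x(k+1)=A_{\sigma_k}x(k)$, $k\ge1$, with deterministic $x(1)\in\mathbb R^N$. Suppose: (a) $\mathcal G(A)$ is rooted. (b) There exists $\alpha>0$ such that whenever $\mathbb P(\sigma_k\mid\sigma_{k-1},\dots,\sigma_1)\neq0$, it is $\ge\alpha$. (c) For every $k\ge1$ there is $\mathscr I_k\subseteq V$ such that $\{\sigma:\mathbb P(\sigma_k=\sigma\mid\sigma_{k-1},\dots,\sigma_1)\neq0\}=\mathscr I_k$ for all past values $(\sigma_{k-1},\dots,\sigma_1)\in V^{k-1}$. (d) There exists $q>0$ with $\bigcup_{\tau=k}^{k+q-1}\mathscr I_\tau=V$ for all $k\ge1$. (e) There exists a nonempty $\chi\subseteq\mathbbm r(A)$ (a strongly connected component of $\mathbbm r(A)$, i.e. the subgraph of $\mathcal G(A)$ induced by $\chi$ is strongly connected) with $\chi\subseteq\mathscr I_k$ for all $k\ge1$. Then the iteration reaches consensus almost surely.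
   Context: $\mathcal G(A)$ is the directed graph on $V$ with an edge $(j,i)$ iff $a_{ij}>0$; it is rooted if some node $r$ has a directed path to every other node, and $\mathbbm r(A)$ is the set of such roots. For $\sigma\in V$, $A_\sigma$ is the identity matrix with its $\sigma$-th row replaced by the $\sigma$-th row of $A$. For $k=1$ conditional probabilities given the empty past are unconditional. The iteration reaches consensus almost surely if for every $\varepsilon>0$ and every $x(1)$, $\lim_{k\to\infty}\mathbb P\big(\sum_{j=1}^N (x_j(k)-\frac1N\sum_{i=1}^N x_i(k))^2\ge\varepsilon\big)=0$. *)

(* Defs.v *)
From HB Require Import structures.
From mathcomp Require Import all_boot all_order all_algebra.
From mathcomp Require Import all_classical all_reals all_analysis.
Set Implicit Arguments. Unset Strict Implicit. Unset Printing Implicit Defensive.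
Import Order.TTheory GRing.Theory Num.Theory.
Local Open Scope classical_set_scope.
Local Open Scope ring_scope.

(* Nodes V = {1..N} are 'I_N. *)

Section Defs.
Context {R : realType} {N : nat}.

Definition row_stochastic (A : 'M[R]_N) : Prop :=
  (forall i j, 0 <= A i j) /\ (forall i, \sum_j A i j = 1).

Definition gedge (A : 'M[R]_N) : rel 'I_N := fun j i => 0 < A i j.

Definition root_set (A : 'M[R]_N) : {set 'I_N} :=
  [set r | [forall i, connect (gedge A) r i]].

Definition rooted (A : 'M[R]_N) : Prop := exists r, r \in root_set A.

Definition induced_strongly_connected (A : 'M[R]_N) (chi : {set 'I_N}) : Prop :=
  forall i j, i \in chi -> j \in chi ->
    connect (fun a b => [&& a \in chi, b \in chi & gedge A a b]) i j.

(* A_sigma: identity with its sigma-th row replaced by the sigma-th row of A *)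
Definition Asub (A : 'M[R]_N) (s : 'I_N) : 'M[R]_N :=
  \matrix_(i, j) (if i == s then A i j else (i == j)%:R).

(* trajectory: traj A sigma x1 n t = x(n+1) with x(1) = x1 and
   x(k+1) = A_{sigma_k} x(k) *)
Fixpoint traj {T : Type} (A : 'M[R]_N) (sigma : nat -> T -> 'I_N)
    (x1 : 'cV[R]_N) (n : nat) (t : T) : 'cV[R]_N :=
  match n with
  | 0 => x1
  | n'.+1 => Asub A (sigma n'.+1 t) *m traj A sigma x1 n' t
  end.

Definition disagreement (x : 'cV[R]_N) : R :=
  \sum_j (x j 0 - N%:R^-1 * \sum_i x i 0) ^+ 2.

End Defs.

Section Prob.
Context {d : measure_display} {T : measurableType d} {R : realType}.

Definition condP (P : probability T R) (A B : set T) : R :=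
  fine (P (A `&` B)) / fine (P B).

(* the event {sigma_{k-1} = past_{k-1}, ..., sigma_1 = past_1},
   past : 'I_(k-1) -> V, past i = value of sigma_(i+1) *)
Definition past_event {N : nat} (sigma : nat -> T -> 'I_N) (k : nat)
    (past : {ffun 'I_k.-1 -> 'I_N}) : set T :=
  [set t | forall i : 'I_k.-1, sigma i.+1 t = past i].

Definition cur_event {N : nat} (sigma : nat -> T -> 'I_N) (k : nat) (s : 'I_N)
  : set T := [set t | sigma k t = s].

End Prob.
Arguments past_event {d T N} sigma k past.
Arguments cur_event {d T N} sigma k s.

(* Main.v *)
Require Import Defs.
From HB Require Import structures.
From mathcomp Require Import all_boot all_order all_algebra.
From mathcomp Require Import all_classical all_reals all_analysis.
From mathcomp Require Import ring lra zify.
Import Order.TTheory GRing.Theory Num.Theory.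
Local Open Scope classical_set_scope.
Local Open Scope ring_scope.
Set Implicit Arguments. Unset Strict Implicit.

Section Det.
Context {R : realType} {N : nat} (A : 'M[R]_N).

Definition spread (x : 'cV[R]_N) : R :=
  \big[Num.max/0]_i \big[Num.max/0]_j (x i 0 - x j 0).

Lemma spread_ge (x : 'cV[R]_N) i j : x i 0 - x j 0 <= spread x.
Proof.
rewrite /spread; apply: le_trans (le_bigmax _ _ i).
exact: (le_bigmax _ (fun j => x i 0 - x j 0) j).
Qed.

Lemma spread_ge0 (x : 'cV[R]_N) : 0 <= spread x.
Proof.
by rewrite /spread bigmax_idl le_max lexx.
Qed.

Lemma spread_le (x : 'cV[R]_N) c : 0 <= c -> (forall i j, x i 0 - x j 0 <= c) -> spread x <= c.
Proof.
move=> c0 H; apply: bigmax_le => // i _; apply: bigmax_le => // j _; exact: H.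
Qed.

Definition stoch (W : 'M[R]_N) := (forall i j, 0 <= W i j) /\ (forall i, \sum_j W i j = 1).

Lemma stoch_diff W (x : 'cV[R]_N) i j : stoch W ->
  (W *m x) i 0 - (W *m x) j 0 = \sum_k \sum_l W i k * W j l * (x k 0 - x l 0).
Proof.
move=> [W0 W1]; rewrite !mxE.
have -> : \sum_k \sum_l W i k * W j l * (x k 0 - x l 0) =
   \sum_k \sum_l W i k * W j l * x k 0 - \sum_l \sum_k W i k * W j l * x l 0.
  rewrite [X in _ = _ - X]exchange_big /= -sumrB.
  by apply: eq_bigr => k _; rewrite -sumrB; apply: eq_bigr => l _; ring.
congr (_ - _).
  apply: eq_bigr => k _; rewrite -[LHS]mulr1 -(W1 j) big_distrr /=.
  by apply: eq_bigr => l _; ring.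
apply: eq_bigr => l _; rewrite -[LHS]mulr1 -(W1 i) big_distrr /=.
by apply: eq_bigr => k _; ring.
Qed.

Lemma stoch_contr W (x : 'cV[R]_N) i j c : stoch W ->
  (W *m x) i 0 - (W *m x) j 0 <= spread x * (1 - W i c * W j c).
Proof.
move=> Ws; have [W0 W1] := Ws; rewrite stoch_diff //.
apply: (@le_trans _ _ (\sum_k \sum_l W i k * W j l * (spread x * (1 - (k == l)%:R)))).
  apply: ler_sum => k _; apply: ler_sum => l _.
  apply: ler_wpM2l; first exact: mulr_ge0.
  case: eqP => [->|_]; first by rewrite subrr subrr mulr0.
  by rewrite subr0 mulr1 spread_ge.
have -> : \sum_k \sum_l W i k * W j l * (spread x * (1 - (k == l)%:R)) =
    spread x * (1 - \sum_k W i k * W j k).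
  have -> : \sum_k \sum_l W i k * W j l * (spread x * (1 - (k == l)%:R)) =
     \sum_k (W i k * spread x - W i k * W j k * spread x).
    apply: eq_bigr => k _.
    rewrite (bigD1 k) //= eqxx subrr mulr0 mulr0 add0r.
    have -> : \sum_(l | l != k) W i k * W j l * (spread x * (1 - (k == l)%:R))
      = \sum_(l | l != k) W i k * spread x * W j l.
      by apply: eq_big => // l /negPf; rewrite eq_sym => ->; rewrite subr0; ring.
    rewrite -big_distrr /=.
    have : \sum_l W j l = W j k + \sum_(l | l != k) W j l by rewrite (bigD1 k).
    rewrite W1 => E.
    have -> : \sum_(l | l != k) W j l = 1 - W j k by rewrite E; ring.
    ring.
  rewrite sumrB -big_distrl /= W1 -big_distrl /=; ring.
apply: ler_wpM2l; first exact: spread_ge0.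
rewrite lerD2l lerN2 (bigD1 c) //= lerDl.
by apply: sumr_ge0 => k _; apply: mulr_ge0.
Qed.

Lemma stoch_nonexp W (x : 'cV[R]_N) : stoch W -> spread (W *m x) <= spread x.
Proof.
move=> Ws; apply: spread_le; first exact: spread_ge0.
move=> i j; apply: le_trans (stoch_contr x i j i Ws) _.
have [W0 _] := Ws.
by rewrite ler_piMr ?spread_ge0 // lerBlDr lerDl mulr_ge0.
Qed.

Lemma stoch_contr2 W (x : 'cV[R]_N) c e : stoch W -> 0 <= e -> e <= 1 ->
  (forall i, e <= W i c) -> spread (W *m x) <= (1 - e ^+ 2) * spread x.
Proof.
move=> Ws e0 e1 He; apply: spread_le.
  by apply: mulr_ge0; [rewrite subr_ge0 expr_le1 | exact: spread_ge0].
move=> i j; apply: le_trans (stoch_contr x i j c Ws) _.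
rewrite mulrC; apply: ler_wpM2r; first exact: spread_ge0.
rewrite lerD2l lerN2 expr2; apply: ler_pM => //.
Qed.

Definition Asub' (s : 'I_N) := Asub A s.

Lemma stoch_Asub s : row_stochastic A -> stoch (Asub A s).
Proof.
move=> [A0 A1]; split=> [i j|i]; rewrite /Asub.
  by rewrite mxE; case: eqP => _ //; rewrite ler0n.
under eq_bigr do rewrite mxE.
case: eqP => [_|_]; first exact: A1.
rewrite (bigD1 i) //= eqxx big1 ?addr0 // => j /negPf; rewrite eq_sym => ->.
by [].
Qed.

Lemma stoch_mul W1 W2 : stoch W1 -> stoch W2 -> stoch (W1 *m W2).
Proof.
move=> [P0 P1] [Q0 Q1]; split=> [i j|i].
  by rewrite mxE; apply: sumr_ge0 => k _; apply: mulr_ge0.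
under eq_bigr do rewrite mxE.
rewrite exchange_big /= -[RHS](P1 i); apply: eq_bigr => k _.
by rewrite -big_distrr /= Q1 mulr1.
Qed.

Lemma stoch1 : stoch 1%:M.
Proof.
split=> [i j|i]; first by rewrite mxE ler0n.
rewrite (bigD1 i) //= mxE eqxx big1 ?addr0 // => j /negPf; rewrite mxE eq_sym => ->.
by [].
Qed.

Definition app {m} (w : seq 'I_N) (x : 'M[R]_(N, m)) : 'M[R]_(N, m) :=
  foldl (fun y s => Asub A s *m y) x w.

Lemma app_mul w : forall m (x : 'M[R]_(N, m)), app w x = app w 1%:M *m x.
Proof.
elim: w => [|s w IH] m x /=; first by rewrite mul1mx.
by rewrite /app /= -/(app w _) -/(app w _) IH (IH _ (Asub A s *m 1%:M)) mulmx1 mulmxA.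
Qed.

Lemma stoch_app w W : row_stochastic A -> stoch W -> stoch (app w W).
Proof.
move=> As; elim: w W => [|s w IH] W Ws //=.
by apply: IH; apply: stoch_mul => //; exact: stoch_Asub.
Qed.

End Det.
Section Comb.
Context {R : realType} {N : nat} (A : 'M[R]_N) (amin : R) (c r : 'I_N).
Context (A0 : forall i j, 0 <= A i j) (amin_gt0 : 0 < amin) (amin_le1 : amin <= 1)
  (amin_le : forall i j, 0 < A i j -> amin <= A i j).

Definition Inv (S : {set 'I_N}) (W : 'M[R]_N) (t : nat) :=
  (forall i j, 0 <= W i j) /\ (forall i, i \in S -> amin ^+ t <= W i c).

Lemma Inv_sub (S S' : {set 'I_N}) (W : 'M[R]_N) (t : nat) : {subset S' <= S} -> Inv S W t -> Inv S' W t.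
Proof. by move=> sub [W0 Wc]; split=> // i /sub; exact: Wc. Qed.

Lemma Asub_mulE s (W : 'M[R]_N) i j :
  (Asub A s *m W) i j = if i == s then \sum_k A s k * W k j else W i j.
Proof.
rewrite mxE; case: (eqVneq i s) => [->|ne].
  by apply: eq_bigr => k _; rewrite mxE eqxx.
rewrite (bigD1 i) //= mxE (negPf ne) eqxx mul1r big1 ?addr0 // => k /negPf ki.
by rewrite mxE (negPf ne) eq_sym ki mul0r.
Qed.

Lemma Inv_update (S : {set 'I_N}) (W : 'M[R]_N) (t : nat) s j0 : Inv S W t -> j0 \in S -> 0 < A s j0 ->
  Inv (s |: S) (Asub A s *m W) t.+1.
Proof.
move=> [W0 Wc] j0S As; split.
  move=> i j; rewrite Asub_mulE; case: ifP => _ //.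
  by apply: sumr_ge0 => k _; apply: mulr_ge0.
move=> i; rewrite in_setU1 Asub_mulE; case: (eqVneq i s) => [_ _|ne /= iS].
  have H : A s j0 * W j0 c <= \sum_k A s k * W k c.
    rewrite (bigD1 j0) //= lerDl; apply: sumr_ge0 => k _; exact: mulr_ge0.
  apply: le_trans H; rewrite exprS; apply: ler_pM => //.
  - exact: ltW.
  - exact: exprn_ge0 (ltW amin_gt0).
  - exact: amin_le.
  - exact: Wc.
apply: le_trans (Wc _ iS); rewrite exprS.
by apply: ler_piMl => //; exact: exprn_ge0 (ltW amin_gt0).
Qed.

Lemma Inv_pad n (S : {set 'I_N}) (W : 'M[R]_N) (t : nat) : Inv S W t -> c \in S -> 0 < A r c ->
  Inv S (app A (nseq n r) W) (t + n).
Proof.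
elim: n W t => [|n IH] W t HI cS Arc; first by rewrite addn0.
rewrite /= -/(app A _ _) -addSnnS; apply: IH => //.
apply: (@Inv_sub (r |: S)); first by move=> i iS; rewrite in_setU1 iS orbT.
exact: Inv_update HI cS Arc.
Qed.

Fixpoint adm (I : nat -> {set 'I_N}) (k : nat) (w : seq 'I_N) : Prop :=
  match w with [::] => True | s :: w' => s \in I k /\ adm I k.+1 w' end.

Lemma adm_cat (I : nat -> {set 'I_N}) k a b : adm I k a -> adm I (k + size a) b -> adm I k (a ++ b).
Proof.
elim: a k => [|s a IH] k /=; first by rewrite addn0.
by move=> [sI Ha] Hb; split=> //; apply: IH => //; rewrite addSnnS.
Qed.

Lemma adm_nseq (I : nat -> {set 'I_N}) k n : (forall k', (1 <= k')%N -> r \in I k') -> (1 <= k)%N ->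
  adm I k (nseq n r).
Proof.
move=> rI; elim: n k => [|n IH] k k1 //=; split; first exact: rI.
by apply: IH; lia.
Qed.

Lemma block (I : nat -> {set 'I_N}) q (S : {set 'I_N}) (W : 'M[R]_N) (t : nat) k v j0 : (forall k', (1 <= k')%N -> r \in I k') -> (1 <= k)%N ->
  (exists tau, (k <= tau < k + q)%N /\ v \in I tau) -> Inv S W t -> c \in S -> 0 < A r c ->
  j0 \in S -> 0 < A v j0 ->
  exists w, [/\ adm I k w, size w = q & Inv (v |: S) (app A w W) (t + q)].
Proof.
move=> rI k1 [tau [/andP[kt tq] vI]] HI cS Arc j0S Av.
exists (nseq (tau - k) r ++ v :: nseq (k + q - tau.+1) r); split.
- apply: adm_cat; first exact: adm_nseq.
  rewrite size_nseq /=; split; first by rewrite subnKC.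
  by apply: adm_nseq => //; lia.
- by rewrite size_cat /= !size_nseq; lia.
- rewrite /app foldl_cat /= -/(app A _ _) -/(app A _ _).
  have H1 := Inv_pad (tau - k) HI cS Arc.
  have H2 := Inv_update H1 j0S Av.
  have cS' : c \in v |: S by rewrite in_setU1 cS orbT.
  have H3 := Inv_pad (k + q - tau.+1) H2 cS' Arc.
  have -> : (t + q = (t + (tau - k)).+1 + (k + q - tau.+1))%N by lia.
  exact: H3.
Qed.


Lemma card_step (S : {set 'I_N}) b : b \notin S -> (#|~: (b |: S)| < #|~: S|)%N.
Proof.
move=> bS; apply: proper_card; rewrite properE finset.setCS finset.subsetUr /=.
apply/negP => /fintype.subsetP H; have := H b; rewrite !inE eqxx bS /=.
by move=> /(_ isT).
Qed.

Lemma build (I : nat -> {set 'I_N}) q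
  (rI : forall k', (1 <= k')%N -> r \in I k') (Arc : 0 < A r c)
  (cover : forall k v, (1 <= k)%N -> exists tau, (k <= tau < k + q)%N /\ v \in I tau)
  (reach : forall S : {set 'I_N}, c \in S -> forall y, y \notin S ->
     exists a b, [/\ a \in S, b \notin S & 0 < A b a]) m :
  forall (S : {set 'I_N}) (W : 'M[R]_N) (t : nat) k, (1 <= k)%N -> c \in S ->
  (#|~: S| <= m)%N -> Inv S W t ->
  exists w, [/\ adm I k w, size w = (m * q)%N & Inv [set: 'I_N]%SET (app A w W) (t + m * q)].
Proof.
elim: m => [|m IH] S W t k k1 cS cardS HI.
  exists [::]; split => //; rewrite mul0n addn0 /=.
  apply: Inv_sub HI => i _; move: cardS; rewrite leqn0 cards_eq0 => /eqP E.
  have : i \notin ~: S by rewrite E inE.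
  by rewrite finset.in_setC negbK.
case: (pickP (fun y => y \notin S)) => [y yS|allS].
  have [a [b [aS bS Aba]]] := reach S cS y yS.
  have [w1 [ad1 sz1 I1]] := block rI k1 (cover k b k1) HI cS Arc aS Aba.
  have cS' : c \in b |: S by rewrite in_setU1 cS orbT.
  have c' : (#|~: (b |: S)| <= m)%N.
    by have := card_step bS; lia.
  have [w2 [ad2 sz2 I2]] := IH _ _ _ (k + q)%N ltac:(lia) cS' c' I1.
  exists (w1 ++ w2); split.
  - by apply: adm_cat => //; rewrite sz1.
  - by rewrite size_cat sz1 sz2 mulSn.
  - by rewrite /app foldl_cat -/(app A _ _) -/(app A _ _) mulSn addnA.
have [w1 [ad1 sz1 I1]] := block rI k1 (cover k r k1) HI cS Arc cS Arc.
have cS' : c \in r |: S by rewrite in_setU1 cS orbT.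
have c' : (#|~: (r |: S)| <= m)%N.
  suff -> : ~: (r |: S) = finset.set0 by rewrite cards0.
  apply/setP => i; rewrite !inE; have := allS i; rewrite /= => /negbFE ->.
  by rewrite orbT.
have [w2 [ad2 sz2 I2]] := IH _ _ _ (k + q)%N ltac:(lia) cS' c' I1.
exists (w1 ++ w2); split.
- by apply: adm_cat => //; rewrite sz1.
- by rewrite size_cat sz1 sz2 mulSn.
- by rewrite /app foldl_cat -/(app A _ _) -/(app A _ _) mulSn addnA.
Qed.

End Comb.

Lemma reach_lemma {N} (e : rel 'I_N) (S : {set 'I_N}) x y :
  connect e x y -> x \in S -> y \notin S ->
  exists a b, [/\ a \in S, b \notin S & e a b].
Proof.
move=> /connectP [p pth ->]; elim: p x pth => [|z p IH] x /= pth xS.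
  by rewrite xS.
case/andP: pth => exz pth; case: (boolP (z \in S)) => zS.
  exact: IH.
by move=> _; exists x, z.
Qed.

Section Tree.
Context {R : realType} {N : nat} (p : seq 'I_N -> R)
  (p0 : forall u, 0 <= p u) (psum : forall u, p u = \sum_s p (rcons u s)).

Fixpoint Sum (m : nat) (F : seq 'I_N -> R) (u : seq 'I_N) : R :=
  match m with 0 => F u | m'.+1 => \sum_s Sum m' F (rcons u s) end.

Lemma Sum_add a b F u : Sum (a + b) F u = Sum a (Sum b F) u.
Proof.
elim: a u => [|a IH] u //=.
by apply: eq_bigr => s _; rewrite IH.
Qed.

Lemma Sum_le m F G u : (forall v, F v <= G v) -> Sum m F u <= Sum m G u.
Proof.
move=> FG; elim: m u => [|m IH] u //=; by apply: ler_sum => s _; apply: IH.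
Qed.

Lemma Sum_scale m a F u : Sum m (fun v => a * F v) u = a * Sum m F u.
Proof.
elim: m u => [|m IH] u //=; rewrite big_distrr /=; by apply: eq_bigr => s _; rewrite IH.
Qed.

Lemma Sum_ge0 m F u : (forall v, 0 <= F v) -> 0 <= Sum m F u.
Proof.
move=> F0; elim: m u => [|m IH] u //=; by apply: sumr_ge0 => s _; apply: IH.
Qed.

Lemma Sum_p m u : Sum m p u = p u.
Proof.
elim: m u => [|m IH] u //=; rewrite [RHS]psum; by apply: eq_bigr => s _; rewrite IH.
Qed.

Lemma p_rcons_le u s : p (rcons u s) <= p u.
Proof.
by rewrite [leRHS]psum (bigD1 s) //= lerDl; apply: sumr_ge0 => ? _.
Qed.

Lemma p_cat_le u w : p (u ++ w) <= p u.
Proof.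
elim: w u => [|s w IH] u; first by rewrite cats0.
by rewrite -cat_rcons; apply: le_trans (IH _) (p_rcons_le _ _).
Qed.

Context (h : seq 'I_N -> R) (h0 : forall v, 0 <= h v)
  (hmon : forall v s, h (rcons v s) <= h v).

Lemma h_cat_le u w : h (u ++ w) <= h u.
Proof.
elim: w u => [|s w IH] u; first by rewrite cats0.
by rewrite -cat_rcons; apply: le_trans (IH _) (hmon _ _).
Qed.

Let H v := p v * h v.

Lemma Sum_H_le m u : Sum m H u <= p u * h u.
Proof.
elim: m u => [|m IH] u //=.
apply: (@le_trans _ _ (\sum_s p (rcons u s) * h u)).
  apply: ler_sum => s _; apply: le_trans (IH _) _.
  by apply: ler_wpM2l => //.
by rewrite -big_distrl /= -psum.
Qed.

Lemma Sum_H_word w u :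
  Sum (size w) H u <= p u * h u - p (u ++ w) * (h u - h (u ++ w)).
Proof.
elim: w u => [|s w IH] u /=; first by rewrite cats0 subrr mulr0 subr0.
rewrite (bigD1 s) //= -cat_rcons.
set us := rcons u s.
have Hrest : \sum_(s' | s' != s) Sum (size w) H (rcons u s') <=
    \sum_(s' | s' != s) p (rcons u s') * h u.
  apply: ler_sum => s' _; apply: le_trans (Sum_H_le _ _) _.
  by apply: ler_wpM2l => //.
have Hp : p u = p us + \sum_(s' | s' != s) p (rcons u s') by rewrite psum (bigD1 s).
have E1 := IH us.
have a1 : h us <= h u by apply: hmon.
have a2 : p (us ++ w) <= p us by apply: p_cat_le.
have a3 : 0 <= p (us ++ w) := p0 _.
have a4 : 0 <= h (us ++ w) := h0 _.
rewrite -big_distrl /= in Hrest.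
have a5 : \sum_(s' | s' != s) p (rcons u s') = p u - p us by rewrite Hp; ring.
rewrite a5 in Hrest.
have : p us * h us - p (us ++ w) * (h us - h (us ++ w)) <=
   p us * h u - p (us ++ w) * (h u - h (us ++ w)).
  have -> : p us * h us - p (us ++ w) * (h us - h (us ++ w)) =
     (p us - p (us ++ w)) * h us + p (us ++ w) * h (us ++ w) by ring.
  have -> : p us * h u - p (us ++ w) * (h u - h (us ++ w)) =
     (p us - p (us ++ w)) * h u + p (us ++ w) * h (us ++ w) by ring.
  rewrite lerD2r; apply: ler_wpM2l => //; by rewrite subr_ge0.
move=> E2.
have := lerD (le_trans E1 E2) Hrest.
move=> E3; apply: le_trans E3 _; rewrite le_eqVlt; apply/orP; left; apply/eqP; ring.
Qed.

End Tree.
Section ProbLink.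
Context {R : realType} {d : measure_display} {T : measurableType d}
  (P : probability T R) {N : nat} (sigma : nat -> T -> 'I_N)
  (msig : forall k s, (1 <= k)%N -> measurable (cur_event sigma k s)).

Definition prefix n t := [seq sigma i.+1 t | i <- iota 0 n].

Lemma prefixS n t : prefix n.+1 t = rcons (prefix n t) (sigma n.+1 t).
Proof.
rewrite /prefix.
have -> : iota 0 n.+1 = rcons (iota 0 n) n by rewrite -cats1 -addn1 iotaD.
by rewrite map_rcons.
Qed.

Lemma size_prefix n t : size (prefix n t) = n.
Proof. by rewrite size_map size_iota. Qed.

Definition pe (u : seq 'I_N) : set T := [set t | prefix (size u) t = u].

Lemma pe_nil : pe [::] = setT.
Proof. by apply/funext => t; apply/propext; split. Qed.

Lemma pe_rcons u s : pe (rcons u s) = pe u `&` cur_event sigma (size u).+1 s.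
Proof.
apply/funext => t; apply/propext; rewrite /pe /cur_event /= size_rcons prefixS.
by split => [/rcons_inj [-> ->]|[-> ->]].
Qed.

Lemma pe_meas u : measurable (pe u).
Proof.
elim/last_ind: u => [|u s IH]; first by rewrite pe_nil.
by rewrite pe_rcons; apply: measurableI => //; apply: msig.
Qed.

Lemma pe_past u : pe u =
  past_event sigma (size u).+1 [ffun i : 'I_(size u) => tnth (in_tuple u) i].
Proof.
apply/funext => t; apply/propext; rewrite /pe /past_event /=; split.
  move=> E i; rewrite ffunE (tnth_nth (sigma 0 t)) /=.
  transitivity (nth (sigma 0 t) (prefix (size u) t) i); last by rewrite E.
  by rewrite /prefix (nth_map 0%N) ?size_iota // nth_iota.
move=> H; apply: (@eq_from_nth _ (sigma 0 t)); first by rewrite size_prefix.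
move=> i; rewrite size_prefix => Hi.
rewrite /prefix (nth_map 0%N) ?size_iota // nth_iota // add0n.
by have := H (Ordinal Hi); rewrite ffunE (tnth_nth (sigma 0 t)).
Qed.

Definition pr (u : seq 'I_N) : R := fine (P (pe u)).

Lemma pr_fin u : P (pe u) \is a fin_num.
Proof. exact: fin_num_measure (pe_meas u). Qed.

Lemma prE u : P (pe u) = (pr u)%:E.
Proof. by rewrite /pr fineK // pr_fin. Qed.

Lemma pr_ge0 u : 0 <= pr u.
Proof. by rewrite /pr fine_ge0. Qed.

Lemma pr_nil : pr [::] = 1.
Proof. by rewrite /pr pe_nil probability_setT. Qed.

Lemma in_bigsetU (F : 'I_N -> set T) x :
  (\big[setU/set0]_s F s) x <-> exists s, F s x.
Proof.
split.
  elim/big_ind: _ => //= [X Y HX HY [/HX|/HY] //|s _ Fs]; by exists s.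
move=> [s Fs]; rewrite (bigD1 s) //=; by left.
Qed.

Lemma pe_split u : pe u = \big[setU/set0]_s pe (rcons u s).
Proof.
apply/funext => t; apply/propext; rewrite in_bigsetU; split.
  move=> Hu; exists (sigma (size u).+1 t); rewrite pe_rcons; split => //.
move=> [s]; rewrite pe_rcons; by case.
Qed.

Lemma pe_triv u : trivIset setT (fun s => pe (rcons u s)).
Proof.
move=> i j _ _ [t []]; rewrite !pe_rcons /cur_event => [[_ /= <-] [_ /= <-]].
by [].
Qed.

Lemma pr_sum u : pr u = \sum_s pr (rcons u s).
Proof.
have : P (pe u) = \sum_s P (pe (rcons u s)).
  rewrite {1}pe_split measure_bigsetU_ord //.
    by move=> s; exact: pe_meas.
  exact: pe_triv.
rewrite prE; under eq_bigr do rewrite prE.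
by rewrite sumEFin => -[].
Qed.

Lemma pr_event (B : pred (seq 'I_N)) m : forall u,
  measurable (pe u `&` [set t | B (prefix (size u + m) t)]) /\
  P (pe u `&` [set t | B (prefix (size u + m) t)]) =
    (Sum m (fun v => pr v * (B v)%:R) u)%:E.
Proof.
elim: m => [|m IH] u.
  have -> : pe u `&` [set t | B (prefix (size u + 0) t)] = if B u then pe u else set0.
    apply/funext => t; apply/propext; rewrite addn0; split.
      by move=> [E]; rewrite /= E => ->.
    by case: ifP => // Bu E; split => //; rewrite /= E.
  case: ifP => Bu; last by split => //; rewrite measure0 /= Bu mulr0.
  by split; [exact: pe_meas | rewrite prE /= Bu mulr1].
have E : pe u `&` [set t | B (prefix (size u + m.+1) t)] =
  \big[setU/set0]_s (pe (rcons u s) `&` [set t | B (prefix (size (rcons u s) + m) t)]).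
  apply/funext => t; apply/propext; rewrite in_bigsetU; split.
    move=> [Hu Bt]; exists (sigma (size u).+1 t); split.
      by rewrite pe_rcons.
    by move: Bt; rewrite /= size_rcons addSnnS.
  move=> [s [Hs Bt]]; split; first by move: Hs; rewrite pe_rcons => -[].
  by move: Bt; rewrite /= size_rcons addSnnS.
rewrite E; split.
  by apply: bigsetU_measurable => s _; case: (IH (rcons u s)).
rewrite measure_bigsetU_ord //.
- rewrite /=; under eq_bigr do rewrite (proj2 (IH _)).
  by rewrite sumEFin.
- by move=> s; case: (IH (rcons u s)).
- move=> i j _ _ [t [[Hi _] [Hj _]]].
  have := pe_triv (u:=u); rewrite /trivIset => /(_ i j I I); apply.
  by exists t; split.
Qed.

End ProbLink.
Lemma disagree_le {R : realType} {N : nat} (x : 'cV[R]_N) : (0 < N)%N ->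
  disagreement x <= N%:R * spread x ^+ 2.
Proof.
move=> N0; rewrite /disagreement.
have Nn0 : (N%:R : R) != 0 by rewrite pnatr_eq0 -lt0n.
apply: (@le_trans _ _ (\sum_(j : 'I_N) spread x ^+ 2)).
  apply: ler_sum => j _.
  have E : x j 0 - N%:R^-1 * \sum_i x i 0 = N%:R^-1 * \sum_i (x j 0 - x i 0).
    rewrite sumrB sumr_const card_ord mulrBr; congr (_ - _).
    by rewrite -[x j 0 *+ N]mulr_natl mulrA mulVf // mul1r.
  rewrite E; set a := \sum_i (x j 0 - x i 0).
  have Ha : a <= N%:R * spread x.
    have -> : N%:R * spread x = \sum_(i : 'I_N) spread x by rewrite sumr_const card_ord mulr_natl.
    by apply: ler_sum => i _; apply: spread_ge.
  have Hb : - (N%:R * spread x) <= a.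
    have -> : N%:R * spread x = \sum_(i : 'I_N) spread x by rewrite sumr_const card_ord mulr_natl.
    rewrite -sumrN.
    apply: ler_sum => i _; rewrite lerNl opprB; apply: spread_ge.
  have Np : (0 : R) < N%:R by rewrite ltr0n.
  have s0 := spread_ge0 x.
  have Hc : `|N%:R^-1 * a| <= spread x.
    rewrite normrM ger0_norm; last by rewrite invr_ge0 ltW.
    have Hn : `|a| <= N%:R * spread x by rewrite ler_norml Ha Hb.
    have Ni : 0 <= (N%:R : R)^-1 by rewrite invr_ge0 ltW.
    apply: le_trans (ler_wpM2l Ni Hn) _.
    by rewrite mulrA mulVf // mul1r.
  rewrite -real_normK ?num_real //; apply: lerXn2r => //; rewrite ?nnegrE //.
rewrite sumr_const card_ord mulr_natl.
by [].
Qed.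

Lemma traj_app {R : realType} {d} {T : measurableType d} {N : nat} (A : 'M[R]_N)
  (sigma : nat -> T -> 'I_N) x1 n t :
  traj A sigma x1 n t = app A (prefix sigma n t) x1.
Proof.
elim: n => [|n IH] //.
change (Asub A (sigma n.+1 t) *m traj A sigma x1 n t = app A (prefix sigma n.+1 t) x1).
by rewrite prefixS /app foldl_rcons -/(app A _ _) IH.
Qed.
Unset Implicit Arguments.
Theorem corollary3 (R : realType) (d : measure_display) (T : measurableType d)
  (P : probability T R) (N : nat) (A : 'M[R]_N) (sigma : nat -> T -> 'I_N) :
  (0 < N)%N ->
  row_stochastic A ->
  (forall k s, (1 <= k)%N -> measurable (cur_event sigma k s)) ->
  (* (a) *)
  rooted A ->
  (* (b) *)
  (exists2 alpha : R, 0 < alpha &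
     forall k (past : {ffun 'I_k.-1 -> 'I_N}) s, (1 <= k)%N ->
       (0 < P (past_event sigma k past))%E ->
       condP P (cur_event sigma k s) (past_event sigma k past) != 0 ->
       alpha <= condP P (cur_event sigma k s) (past_event sigma k past)) ->
  forall I : nat -> {set 'I_N},
  (* (c) *)
  (forall k (past : {ffun 'I_k.-1 -> 'I_N}) s, (1 <= k)%N ->
       (0 < P (past_event sigma k past))%E ->
       (condP P (cur_event sigma k s) (past_event sigma k past) != 0
        <-> s \in I k)) ->
  (* (d) *)
  (exists2 q : nat, (0 < q)%N &
     forall k, (1 <= k)%N -> \bigcup_(k <= tau < k + q) I tau = [set: 'I_N]%SET) ->
  (* (e) *)
  (exists chi : {set 'I_N},
     [/\ chi != finset.set0, chi \subset root_set A, induced_strongly_connected A chi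
       & forall k, (1 <= k)%N -> chi \subset I k]) ->
  (* conclusion: consensus almost surely (in the sense defined) *)
  forall (x1 : 'cV[R]_N) (eps : R), 0 < eps ->
    (fun k : nat => P [set t | eps <= disagreement (traj A sigma x1 k t)])
      @ \oo --> 0%E.
Proof.
move=> N0 Ast msig _ [alpha a0 Hb] I Hc [q q0 Hd] [chi [chi0 chiR _ chiI]] x1 eps eps0.
have [A0 A1] := Ast.
have [r rchi] := finset.set0Pn _ chi0.
have rroot : r \in root_set A by apply: (fintype.subsetP chiR).
have rI : forall k, (1 <= k)%N -> r \in I k.
  by move=> k k1; apply: (fintype.subsetP (chiI k k1)).
have [c Arc] : exists c, 0 < A r c.
  case: (pickP (fun j => 0 < A r j)) => [c Hc'|none]; first by exists c.
  exfalso; have := A1 r; rewrite big1 => [/eqP|j _].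
    by rewrite eq_sym oner_eq0.
  by apply/eqP; rewrite eq_le A0 andbT leNgt; have := none j => /= ->.
pose amin := \big[Num.min/1]_(ij : 'I_N * 'I_N | 0 < A ij.1 ij.2) A ij.1 ij.2.
have amin_gt0 : 0 < amin.
  rewrite /amin; elim/big_ind: _ => //= x y Hx Hy.
  by rewrite lt_min Hx Hy.
have amin_le1 : amin <= 1 by rewrite /amin bigmin_idl ge_min lexx.
have amin_le : forall i j, 0 < A i j -> amin <= A i j.
  by move=> i j Aij; apply: (@bigmin_le_cond _ _ _ _ (i, j)).
have cover : forall k v, (1 <= k)%N -> exists tau, (k <= tau < k + q)%N /\ v \in I tau.
  move=> k v k1.
  have : v \in \bigcup_(k <= tau < k + q) I tau by rewrite Hd // inE.
  rewrite big_seq_cond; elim/big_rec: _ => [|tau X /andP[Htau _] IH]; first by rewrite inE.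
  rewrite finset.in_setU => /orP[vI|/IH //].
  by exists tau; split => //; rewrite -mem_index_iota.
have reach : forall S : {set 'I_N}, c \in S -> forall y, y \notin S ->
     exists a b, [/\ a \in S, b \notin S & 0 < A b a].
  move=> S cS y yS.
  have cy : connect (gedge A) c y.
    apply: connect_trans (connect1 (_ : gedge A c r)) _; first exact: Arc.
    by move: rroot; rewrite inE => /forallP.
  exact: reach_lemma cy cS yS.
pose L := (N * q)%N.
pose e := amin ^+ L.
pose gam := 1 - e ^+ 2.
have e0 : 0 <= e by apply: exprn_ge0; apply: ltW.
have e1 : e <= 1 by apply: exprn_ile1 => //; apply: ltW.
have good : forall k, (1 <= k)%N -> exists w, [/\ adm I k w, size w = L &
    forall y : 'cV[R]_N, spread (app A w y) <= gam * spread y].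
  move=> k k1.
  have HI0 : Inv amin c [set c]%SET (1%:M : 'M[R]_N) 0.
    split=> [i j|i]; first by rewrite mxE ler0n.
    by rewrite inE => /eqP ->; rewrite mxE eqxx expr0.
  have cS : c \in [set c]%SET by rewrite inE.
  have card : (#|~: [set c]%SET| <= N)%N.
    by apply: leq_trans (max_card _) _; rewrite card_ord.
  have [w [adw szw Iw]] := build A0 amin_gt0 amin_le1 amin_le rI Arc cover reach k1 cS card HI0.
  exists w; split => // y.
  rewrite app_mul; apply: stoch_contr2 => //.
    by apply: stoch_app => //; exact: stoch1.
  by move=> i; have [_ /(_ i)] := Iw; rewrite add0n; apply; rewrite inE.
pose p := pr P sigma.
have p0 : forall u, 0 <= p u by move=> u; apply: pr_ge0.
have psum : forall u, p u = \sum_s p (rcons u s) := pr_sum P msig.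
pose a' := Num.min alpha 1.
have a'0 : 0 < a' by rewrite lt_min a0 ltr01.
have a'1 : a' <= 1 by rewrite ge_min lexx orbT.
have step : forall u s, s \in I (size u).+1 -> a' * p u <= p (rcons u s).
  move=> u s sI.
  have [pz|ppos] : P (pe sigma u) = 0%E \/ (0 < P (pe sigma u))%E.
    by rewrite lt0e measure_ge0 andbT; case: eqP; auto.
    by rewrite /p /pr pz /= mulr0; exact: pr_ge0.
  have Hp := ppos; rewrite pe_past in Hp.
  have Hne := (Hc (size u).+1 _ s isT Hp).2 sI.
  have Hal := Hb (size u).+1 _ s isT Hp Hne.
  rewrite /condP -pe_past setIC -pe_rcons in Hal.
  have pu : 0 < p u.
    rewrite /p /pr; apply: fine_gt0; rewrite ppos /= ltey_eq.
    by rewrite (pr_fin P msig).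
  apply: le_trans (_ : alpha * p u <= _).
    by apply: ler_wpM2r; [exact: ltW | rewrite ge_min lexx].
  by rewrite -ler_pdivlMr.
have lowb : forall w u, adm I (size u).+1 w -> a' ^+ (size w) * p u <= p (u ++ w).
  elim => [|s w IH] u /=; first by rewrite expr0 mul1r cats0.
  move=> [sI adw]; rewrite -cat_rcons.
  have := IH (rcons u s); rewrite size_rcons => /(_ adw) H.
  apply: le_trans H; rewrite exprSr -mulrA; apply: ler_wpM2l.
    by apply: exprn_ge0; apply: ltW.
  exact: step.
pose h v := spread (app A v x1) ^+ 2.
have h0 : forall v, 0 <= h v by move=> v; apply: exprn_ge0; apply: spread_ge0.
have sqle : forall a b : R, 0 <= a -> a <= b -> a ^+ 2 <= b ^+ 2.
  by move=> a b a0' ab; rewrite !expr2; apply: ler_pM.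
have hmon : forall v s, h (rcons v s) <= h v.
  move=> v s; rewrite /h /app foldl_rcons -/(app A _ _).
  apply: sqle; first exact: spread_ge0.
  by apply: stoch_nonexp; apply: stoch_Asub.
have gam0 : 0 <= gam by rewrite subr_ge0 expr_le1.
have gam1 : gam <= 1 by rewrite lerBlDr lerDl exprn_ge0.
have hgood : forall u w, (forall y : 'cV[R]_N, spread (app A w y) <= gam * spread y) ->
    h (u ++ w) <= gam ^+ 2 * h u.
  move=> u w Hw; rewrite /h /app foldl_cat -/(app A _ _) -/(app A _ _) -exprMn.
  apply: sqle; [exact: spread_ge0 | exact: Hw].
pose rho := 1 - a' ^+ L * (1 - gam ^+ 2).
pose H v := p v * h v.
have contract : forall u, Sum L H u <= rho * H u.
  move=> u; have [w [adw szw Hw]] := good (size u).+1 isT.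
  have := Sum_H_word p0 psum h0 hmon w u; rewrite szw => E.
  apply: le_trans E _.
  have L1 : a' ^+ L * p u <= p (u ++ w) by rewrite -szw; apply: lowb.
  have L2 : (1 - gam ^+ 2) * h u <= h u - h (u ++ w).
    have := hgood u w Hw; rewrite mulrBl mul1r => Hg.
    by rewrite lerD2l lerN2.
  have X1 : 0 <= a' ^+ L * p u by apply: mulr_ge0 => //; apply: exprn_ge0; apply: ltW.
  have X2 : 0 <= (1 - gam ^+ 2) * h u.
    by apply: mulr_ge0 => //; rewrite subr_ge0 expr_le1.
  have := ler_pM X1 X2 L1 L2 => Hm.
  have -> : rho * H u = p u * h u - a' ^+ L * p u * ((1 - gam ^+ 2) * h u).
    by rewrite /rho /H; ring.
  by rewrite lerD2l lerN2.
pose E n := Sum n H [::].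
have Emono : forall n, E n.+1 <= E n.
  move=> n; rewrite /E -addn1 Sum_add; apply: Sum_le => v.
  exact: (Sum_H_le p0 psum hmon 1 v).
have Emono' : forall m n, (m <= n)%N -> E n <= E m.
  move=> m n mn; rewrite -(subnKC mn); elim: (n - m)%N => [|k IH].
    by rewrite addn0.
  by rewrite addnS; apply: le_trans (Emono _) IH.
have rho0 : 0 <= rho.
  rewrite subr_ge0; rewrite -[1 in leRHS]mulr1; apply: ler_pM.
  - by apply: exprn_ge0; apply: ltW.
  - by rewrite subr_ge0 expr_le1.
  - by apply: exprn_ile1 => //; apply: ltW.
  - by rewrite lerBlDr lerDl exprn_ge0.
have rho1 : rho < 1.
  rewrite /rho ltrBlDr ltrDl; apply: mulr_gt0; first exact: exprn_gt0.
  rewrite subr_gt0 expr_lt1 //.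
  rewrite /gam ltrBlDr ltrDl; apply: exprn_gt0; apply: exprn_gt0.
  exact: amin_gt0.
have Egeo : forall m, E (m * L)%N <= rho ^+ m * E 0%N.
  elim => [|m IH]; first by rewrite mul0n expr0 mul1r.
  rewrite mulSnr /E Sum_add.
  apply: (@le_trans _ _ (Sum (m * L) (fun u => rho * H u) [::])).
    by apply: Sum_le.
  rewrite Sum_scale; apply: le_trans (ler_wpM2l rho0 IH) _.
  by rewrite exprSr mulrA [rho * _]mulrC.
pose B := fun v : seq 'I_N => eps <= disagreement (app A v x1).
pose rr n := Sum n (fun v => p v * (B v)%:R) [::].
have Ev : forall n, P [set t | eps <= disagreement (traj A sigma x1 n t)] = (rr n)%:E.
  move=> n; have [_ <-] := pr_event P msig B n [::].
  rewrite pe_nil setTI add0n; congr (P _); apply/funext => t.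
  by rewrite /= traj_app.
have -> : (fun k => P [set t | eps <= disagreement (traj A sigma x1 k t)]) =
  (fun n => (rr n)%:E) by apply/funext => n; rewrite Ev.
have rr0 : forall n, 0 <= rr n.
  move=> n; apply: Sum_ge0 => v; apply: mulr_ge0 => //; exact: ler0n.
pose C := N%:R / eps.
have C0 : 0 <= C by rewrite /C divr_ge0 // ?ler0n // ltW.
have rrE : forall n, rr n <= C * E n.
  move=> n; rewrite /rr /E -Sum_scale; apply: Sum_le => v.
  rewrite /H /B; case: (boolP (eps <= disagreement (app A v x1))) => Hv /=.
    rewrite mulr1 mulrCA; rewrite -[X in X <= _]mulr1; apply: ler_wpM2l => //.
    rewrite /C /h mulrAC ler_pdivlMr // mul1r.
    exact: le_trans Hv (disagree_le _ N0).
  by rewrite mulr0; apply: mulr_ge0 => //; apply: mulr_ge0.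
have Hr : rr @ \oo --> 0.
  apply/cvgrPdist_le => e' e'0.
  pose K := C * E 0%N.
  have K0 : 0 <= K by apply: mulr_ge0 => //; apply: Sum_ge0 => v; apply: mulr_ge0.
  have e''0 : 0 < e' / (K + 1) by apply: divr_gt0 => //; apply: ltr_wpDl.
  have Hrho : `|rho| < 1 by rewrite ger0_norm.
  have := cvg_expr Hrho; move/cvgrPdist_le/(_ _ e''0) => [M _ HM].
  exists (M * L)%N => // n /= Hn.
  rewrite sub0r normrN ger0_norm //.
  apply: le_trans (rrE n) _.
  apply: le_trans (ler_wpM2l C0 (Emono' _ _ Hn)) _.
  apply: le_trans (ler_wpM2l C0 (Egeo M)) _.
  have := HM M (leqnn M); rewrite /= sub0r normrN ger0_norm ?exprn_ge0 // => HrM.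
  rewrite mulrCA -/K.
  apply: le_trans (ler_wpM2r K0 HrM) _.
  have K1 : 0 < K + 1 by apply: ltr_wpDl.
  rewrite mulrAC ler_pdivrMr //.
  by rewrite mulrDr mulr1 lerDl; apply: ltW.
apply: cvg_EFin; first by near=> n.
exact: Hr.
Unshelve. all: by end_near.
Qed.
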